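(* Let $\mathbb{K}\in\{\mathbb{R},\mathbb{C}\}$, $\star\in\{*,T\}$, $\epsilon_1,\epsilon_2\in\{1,-1\}$, and let $Q(\lambda)=\lambda^2M+\lambda D+K\in\mathbb{K}^{n\times n}[\lambda]$ satisfy $M^\star=\epsilon_1M$, $D^\star=\epsilon_2D$, $K^\star=\epsilon_1K$. Suppose $(X_c,\Lambda_c)\in\mathbb{K}^{n\times p_1}\times\mathbb{K}^{p_1\times p_1}$ and $(X_f,\Lambda_f)\in\mathbb{K}^{n\times p_2}\times\mathbb{K}^{p_2\times p_2}$ are invariant pairs of $Q(\lambda)$, and let $\Lambda_a\in\mathbb{K}^{p_1\times p_1}$. Let $P\in\mathbb{K}^{p_1\times p_1}$ be a nonsingular matrix such that $R:=X_c^\star MX_cP\Lambda_aP^{-1}+\epsilon_1\epsilon_2\Lambda_c^\star X_c^\star MX_c+X_c^\star DX_c$ is nonsingular, and assume $\sigma(\Lambda_c)\cap\sigma(\epsilon_1\epsilon_2\Lambda_f^\star)=\emptyset$. Let $Z=(\Lambda_c-P\Lambda_aP^{-1})R^{-1}$ and $\triangle M=MX_cZX_c^\star M$, $\triangle D=\epsilon_1\epsilon_2MX_cZ\Lambda_c^\star X_c^\star M+MX_cZX_c^\star D+MX_c\Lambda_cZX_c^\star M+DX_cZX_c^\star M$, $\triangle K=\epsilon_1\epsilon_2MX_c\Lambda_cZ\Lambda_c^\star X_c^\star M+MX_c\Lambda_cZX_c^\star D+\epsilon_1\epsilon_2DX_cZ\Lambda_c^\star X_c^\star M+DX_cZX_c^\star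 D$. Then $(X_a,\Lambda_a)$ with $X_a=X_cP$, and $(X_f,\Lambda_f)$, are invariant pairs of $Q_\triangle(\lambda)=\lambda^2(M+\triangle M)+\lambda(D+\triangle D)+(K+\triangle K)\in\mathbb{K}^{n\times n}[\lambda]$. Moreover, with $S:=X_c^\star MX_c\Lambda_c+\epsilon_1\epsilon_2\Lambda_c^\star X_c^\star MX_c+X_c^\star DX_c$, if $SP\Lambda_aP^{-1}=\epsilon_1(SP\Lambda_aP^{-1})^\star$, then $(M+\triangle M)^\star=\epsilon_1(M+\triangle M)$, $(D+\triangle D)^\star=\epsilon_2(D+\triangle D)$ and $(K+\triangle K)^\star=\epsilon_1(K+\triangle K)$.
   Context: For a matrix $A$, $A^*$ is the conjugate transpose and $A^T$ the transpose; $A^\star$ means $A^*$ if $\star=*$ and $A^T$ if $\star=T$. $\sigma(A)$ is the spectrum of a square matrix $A$. A pair $(X,\Lambda)\in\mathbb{K}^{n\times p}\times\mathbb{K}^{p\times p}$ is an invariant pair of $Q(\lambda)=\lambda^2M+\lambda D+K$ if $Q(X,\Lambda):=MX\Lambda^2+DX\Lambda+KX=0$. *)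

(* Defs.v *)
From HB Require Import structures.
From mathcomp Require Import all_boot all_order all_algebra.
From mathcomp Require Import all_real_closed.
From mathcomp Require Import reals.
Set Implicit Arguments. Unset Strict Implicit. Unset Printing Implicit Defensive.
Import Order.TTheory GRing.Theory Num.Theory.
Local Open Scope ring_scope.

Inductive startype := StarCT | StarT.

(* A^star, with conjK the complex conjugation on the scalar field K
   (the identity when K = R). *)
Definition mxstar (K : pzRingType) (conjK : K -> K) (s : startype) (m n : nat)
  (A : 'M[K]_(m, n)) : 'M[K]_(n, m) :=
  match s with
  | StarCT => map_mx conjK A^T
  | StarT => A^T
  end.

Definition invariant_pair (K : pzRingType) (n p : nat) (M D Km : 'M[K]_n)
  (X : 'M[K]_(n, p)) (La : 'M[K]_p) : Prop :=
  M *m X *m (La *m La) + D *m X *m La + Km *m X = 0.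

(* sigma(A) : the spectrum of a square matrix A, i.e. its eigenvalues taken
   in the algebraically closed field L (= C) via the embedding emb : K -> L. *)
Definition spectrum (K L : fieldType) (emb : K -> L) (p : nat) (A : 'M[K]_p)
  : pred L := fun z => eigenvalue (map_mx emb A) z.

Definition thm38_over (K L : fieldType) (conjK : K -> K) (emb : K -> L) : Prop :=
  forall (st : startype) (e1 e2 : K) (n p1 p2 : nat)
    (M D Km : 'M[K]_n)
    (Xc : 'M[K]_(n, p1)) (Lc : 'M[K]_p1)
    (Xf : 'M[K]_(n, p2)) (Lf : 'M[K]_p2)
    (La P : 'M[K]_p1),
  (e1 = 1 \/ e1 = -1) -> (e2 = 1 \/ e2 = -1) ->
  mxstar conjK st M = e1 *: M ->
  mxstar conjK st D = e2 *: D ->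
  mxstar conjK st Km = e1 *: Km ->
  invariant_pair M D Km Xc Lc ->
  invariant_pair M D Km Xf Lf ->
  P \in unitmx ->
  let star := mxstar conjK st in
  let PLaPi := P *m La *m invmx P in
  let R := star _ _ Xc *m M *m Xc *m PLaPi
           + (e1 * e2) *: (star _ _ Lc *m star _ _ Xc *m M *m Xc)
           + star _ _ Xc *m D *m Xc in
  R \in unitmx ->
  (forall z : L, ~ (z \in spectrum emb Lc /\
                    z \in spectrum emb ((e1 * e2) *: star _ _ Lf))) ->
  let Z := (Lc - PLaPi) *m invmx R in
  let XcS := star _ _ Xc in
  let LcS := star _ _ Lc in
  let dM := M *m Xc *m Z *m XcS *m M in
  let dD := (e1 * e2) *: (M *m Xc *m Z *m LcS *m XcS *m M)
            + M *m Xc *m Z *m XcS *m D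
            + M *m Xc *m Lc *m Z *m XcS *m M
            + D *m Xc *m Z *m XcS *m M in
  let dK := (e1 * e2) *: (M *m Xc *m Lc *m Z *m LcS *m XcS *m M)
            + M *m Xc *m Lc *m Z *m XcS *m D
            + (e1 * e2) *: (D *m Xc *m Z *m LcS *m XcS *m M)
            + D *m Xc *m Z *m XcS *m D in
  let Xa := Xc *m P in
  [/\ invariant_pair (M + dM) (D + dD) (Km + dK) Xa La,
      invariant_pair (M + dM) (D + dD) (Km + dK) Xf Lf
    & let S := XcS *m M *m Xc *m Lc + (e1 * e2) *: (LcS *m XcS *m M *m Xc)
               + XcS *m D *m Xc in
      S *m PLaPi = e1 *: star _ _ (S *m PLaPi) ->
      [/\ star _ _ (M + dM) = e1 *: (M + dM),
          star _ _ (D + dD) = e2 *: (D + dD)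
        & star _ _ (Km + dK) = e1 *: (Km + dK)]].

(* Main.v *)
Require Import Defs.
From HB Require Import structures.
From mathcomp Require Import all_boot all_order all_algebra.
From mathcomp Require Import all_real_closed.
From mathcomp Require Import reals.
Set Implicit Arguments. Unset Strict Implicit. Unset Printing Implicit Defensive.
Import GRing.Theory Num.Theory.
Local Open Scope ring_scope.

Lemma sylv (L : closedFieldType) p q (X : 'M[L]_(q,p)) A B :
  X *m A = B *m X -> (forall z, ~ (eigenvalue A z /\ eigenvalue B z)) -> X = 0.
Proof.
case: p X A => [|p] X A; first by move=> *; rewrite thinmx0.
case: q X B => [|q] X B; first by move=> *; rewrite flatmx0.
move=> hXA hsp.
have hp : forall P : {poly L}, X *m horner_mx A P = horner_mx B P *m X.
  elim/poly_ind => [|P c IH]; first by rewrite !rmorph0 mulmx0 mul0mx.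
  rewrite !rmorphD !rmorphM /= !horner_mx_X !horner_mx_C -!mulmxE.
  by rewrite mulmxDr mulmxDl mulmxA IH -!mulmxA hXA scalar_mxC.
have := hp (char_poly A); rewrite Cayley_Hamilton mulmx0 => /esym h0.
have [r hr] := closed_field_poly_normal (char_poly A).
move: h0; rewrite hr (monicP (char_poly_monic A)) scale1r rmorph_prod.
set H := (\prod_(_ <- _) _).
have Hu : H \in unitmx.
  rewrite /H big_seq; apply: (big_ind (fun M : 'M_q.+1 => M \in unitmx)).
  - exact: unitmx1.
  - by move=> x y hx hy; rewrite -mulmxE unitmx_mul hx hy.
  move=> z zr; rewrite rmorphB /= horner_mx_X horner_mx_C -row_free_unit -kermx_eq0.
  have hA : eigenvalue A z.
    by rewrite eigenvalue_root_char hr (monicP (char_poly_monic A)) scale1r root_prod_XsubC.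
  by apply/negPn/negP => hB; apply: (hsp z).
by move=> h0; rewrite -(mulKmx Hu X) h0 mulmx0.
Qed.

Section Star.
Variables (K : fieldType) (f : {rmorphism K -> K}) (finv : involutive f)
  (st : startype).
Local Notation star := (mxstar f st).

Lemma starM m n p (A : 'M[K]_(m,n)) (B : 'M_(n,p)) :
  star (A *m B) = star B *m star A.
Proof. by case: st => /=; rewrite trmx_mul // map_mxM. Qed.

Lemma starD m n (A B : 'M[K]_(m,n)) : star (A + B) = star A + star B.
Proof. by case: st => /=; rewrite linearD //= map_mxD. Qed.

Lemma starN m n (A : 'M[K]_(m,n)) : star (- A) = - star A.
Proof. by case: st => /=; rewrite linearN //= map_mxN. Qed.

Lemma starB m n (A B : 'M[K]_(m,n)) : star (A - B) = star A - star B.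
Proof. by rewrite starD starN. Qed.

Lemma starZ m n c (A : 'M[K]_(m,n)) : f c = c -> star (c *: A) = c *: star A.
Proof. by move=> hc; case: st => /=; rewrite linearZ //= map_mxZ hc. Qed.

Lemma starK m n (A : 'M[K]_(m,n)) : star (star A) = A.
Proof.
case: st => /=; rewrite ?trmxK //.
rewrite map_trmx trmxK -map_mx_comp; apply/matrixP => i j.
by rewrite mxE /= finv.
Qed.

Lemma starV n (A : 'M[K]_n) : star (invmx A) = invmx (star A).
Proof. by case: st => /=; rewrite trmx_inv // map_invmx. Qed.

Lemma star_unit n (A : 'M[K]_n) : (star A \in unitmx) = (A \in unitmx).
Proof. by case: st => /=; rewrite ?map_unitmx unitmx_tr. Qed.

Lemma star0 m n : star (0 : 'M[K]_(m,n)) = 0.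
Proof. by case: st => /=; rewrite ?trmx0 ?map_mx0 // linear0 map_mx0. Qed.

End Star.


Ltac move_end b :=
  repeat first [ erewrite (addrAC _ b) | erewrite (addrC b) ].

Ltac cancel_all :=
  repeat match goal with
  | |- context [ - ?b ] => move_end b; move_end (- b); first [rewrite subrr | rewrite -addrA subrr ?addr0 ?add0r]
  end.

Ltac mexp := repeat progress rewrite ?mulmxDl ?mulmxDr ?mulmxBl ?mulmxBr ?mulmxN ?mulNmx ?mulmxA
   ?scalerDr ?scalerBr ?scalerN ?scalerA -?scalemxAl -?scalemxAr ?opprD ?opprK ?scaleNr.

Ltac zsolve :=
  apply/eqP; rewrite -subr_eq0; apply/eqP;
  rewrite ?opprD ?opprK ?addrA;
  repeat (let x := fresh "x" in set x := (_ *m _); clearbody x);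
  cancel_all; try done.

Lemma L_Qexp (K : fieldType) n p q (M D Km : 'M[K]_n) (A B : 'M_(n,p)) (Z : 'M_p)
  (U V : 'M_(p,n)) (X : 'M_(n,q)) (La : 'M_q) :
 (M + A *m Z *m U) *m X *m (La *m La) + (D + (A *m Z *m V + B *m Z *m U)) *m X *m La
   + (Km + B *m Z *m V) *m X
 = (M *m X *m (La *m La) + D *m X *m La + Km *m X)
   + A *m Z *m (U *m X *m La + V *m X) *m La + B *m Z *m (U *m X *m La + V *m X).
Proof.
by mexp; zsolve.
Qed.

Lemma L_Xa (K : fieldType) n p (M D Km : 'M[K]_n) (Xc : 'M_(n,p)) (Lc T : 'M_p) :
 M *m Xc *m (T *m T) + D *m Xc *m T + Km *m Xc + M *m Xc *m (Lc - T) *m T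
   + (M *m Xc *m Lc + D *m Xc) *m (Lc - T)
 = M *m Xc *m (Lc *m Lc) + D *m Xc *m Lc + Km *m Xc.
Proof. by mexp; zsolve. Qed.


Ltac ssimp := repeat progress rewrite ?mulr1 ?mul1r ?mulrN ?mulNr ?opprK ?scale1r ?scaleN1r ?scaleNr ?scalerN.

Ltac esolve e1 e2 he1 he2 :=
  case: he1 => ?; case: he2 => ?; subst e1 e2; mexp; ssimp; mexp; ssimp; zsolve.

Lemma L_Y (K : fieldType) n p q (M D Km : 'M[K]_n) (XcS : 'M_(p,n)) (LcS : 'M_p)
  (Xf : 'M_(n,q)) (Lf : 'M_q) e1 e2 :
 (e1 = 1 \/ e1 = -1) -> (e2 = 1 \/ e2 = -1) ->
 let Y := XcS *m M *m Xf *m Lf + ((e1*e2) *: (LcS *m XcS *m M) + XcS *m D) *m Xf in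
 Y *m Lf - (e1*e2) *: (LcS *m Y)
 = XcS *m (M *m Xf *m (Lf *m Lf) + D *m Xf *m Lf + Km *m Xf)
   - e1 *: ((LcS *m LcS *m XcS *m (e1 *: M) + LcS *m XcS *m (e2 *: D)
            + XcS *m (e1 *: Km)) *m Xf).
Proof. move=> he1 he2 Y; rewrite /Y; esolve e1 e2 he1 he2. Qed.

Lemma L_Z (K : fieldType) p (N G H0 Lc LcS T TS : 'M[K]_p) e1 e2 :
 (e1 = 1 \/ e1 = -1) -> (e2 = 1 \/ e2 = -1) ->
 N *m (Lc *m Lc) + G *m Lc + H0 = 0 ->
 LcS *m LcS *m (e1 *: N) + LcS *m (e2 *: G) + e1 *: H0 = 0 ->
 (N *m Lc + (e1 * e2) *: (LcS *m N) + G) *m T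
   = e1 *: (TS *m (LcS *m (e1 *: N) + (e1 * e2) *: ((e1 *: N) *m Lc) + e2 *: G)) ->
 (LcS - TS) *m (N *m T + (e1 * e2) *: (LcS *m N) + G)
 = e1 *: ((TS *m (e1 *: N) + (e1 * e2) *: ((e1 *: N) *m Lc) + e2 *: G) *m (Lc - T)).
Proof.
move=> he1 he2 h1 h2 h3; apply/eqP; rewrite -subr_eq0; apply/eqP.
set S := _ *m T in h3.
transitivity ((e1 * e2) *: (e1 *: (LcS *m LcS *m (e1 *: N) + LcS *m (e2 *: G) + e1 *: H0)
      - (N *m (Lc *m Lc) + G *m Lc + H0))
   + (e1 * e2) *: (S - e1 *: (TS *m (LcS *m (e1 *: N) + (e1 * e2) *: ((e1 *: N) *m Lc) + e2 *: G)))).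
  rewrite /S; clear h1 h2 h3 S; esolve e1 e2 he1 he2.
by rewrite h1 h2 h3 subrr scaler0 subrr scaler0 addr0.
Qed.

Lemma sign_sq (K : fieldType) (e : K) : (e = 1 \/ e = -1) -> e * e = 1.
Proof. by case=> ->; rewrite ?mulr1 ?mulrNN ?mulr1. Qed.

Lemma main (K : fieldType) (L : closedFieldType) (f : {rmorphism K -> K})
  (emb : {rmorphism K -> L}) : involutive f -> thm38_over f emb.
Proof.
move=> finv st e1 e2 n p1 p2 M D Km Xc Lc Xf Lf La P he1 he2 hM hD hK hc hf hP.
move=> star PLaPi R0 hR hsp Z XcS LcS dM dD dK Xa.
have fe1 : f e1 = e1 by case: he1 => ->; rewrite ?rmorph1 ?rmorphN1.
have fe2 : f e2 = e2 by case: he2 => ->; rewrite ?rmorph1 ?rmorphN1.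
have fe12 : f (e1 * e2) = e1 * e2 by rewrite rmorphM fe1 fe2.
subst star.
rewrite /invariant_pair in hc hf.
have eZ : Z = (Lc - PLaPi) *m invmx R0 := erefl.
have eR0 : R0 = XcS *m M *m Xc *m PLaPi + (e1 * e2) *: (LcS *m XcS *m M *m Xc)
   + XcS *m D *m Xc by rewrite /R0 /XcS /LcS.
have ePL : PLaPi = P *m La *m invmx P := erefl.
have eXcS : XcS = mxstar f st Xc := erefl.
have eLcS : LcS = mxstar f st Lc := erefl.
rewrite -/XcS -/LcS in hR hsp *.
clearbody Z R0 PLaPi XcS LcS.
have edM : dM = M *m Xc *m Z *m (XcS *m M) by rewrite /dM !mulmxA.
have edD : dD = M *m Xc *m Z *m ((e1*e2) *: (LcS *m XcS *m M) + XcS *m D)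
   + (M *m Xc *m Lc + D *m Xc) *m Z *m (XcS *m M).
  by rewrite /dD; mexp; zsolve.
have edK : dK = (M *m Xc *m Lc + D *m Xc) *m Z *m ((e1*e2) *: (LcS *m XcS *m M) + XcS *m D).
  by rewrite /dK; mexp; zsolve.
clearbody dM dD dK; subst dM dD dK Xa.
have hZR : forall m (Y : 'M_(m,p1)), Y *m Z *m R0 = Y *m (Lc - PLaPi).
  by move=> m Y; rewrite -mulmxA eZ mulmxKV.
have hT : forall m (Y : 'M_(m,p1)), Y *m P *m La = Y *m PLaPi *m P.
  by move=> m Y; rewrite -!mulmxA ePL mulmxKV.
have hcs : LcS *m LcS *m XcS *m (e1 *: M) + LcS *m XcS *m (e2 *: D)
    + XcS *m (e1 *: Km) = 0.
  have := congr1 (@mxstar K f st n p1) hc.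
  rewrite star0 !starD !starM hM hD hK -eXcS -eLcS !mulmxA //.
have hZ12 : forall m n (A : 'M_(m,n)), mxstar f st ((e1*e2) *: A) = (e1*e2) *: mxstar f st A.
  by move=> m0 n0 A; rewrite starZ.
split; last first.
  move=> S hS.
  have eS : S = XcS *m M *m Xc *m Lc + (e1 * e2) *: (LcS *m (XcS *m M *m Xc)) + XcS *m D *m Xc.
    by rewrite /S !mulmxA.
  have eSs : mxstar f st S = LcS *m (e1 *: (XcS *m M *m Xc))
      + (e1 * e2) *: ((e1 *: (XcS *m M *m Xc)) *m Lc) + e2 *: (XcS *m D *m Xc).
    rewrite eS !starD hZ12 !starM hM hD eLcS eXcS !starK //.
    by mexp.
  have h1 : XcS *m M *m Xc *m (Lc *m Lc) + XcS *m D *m Xc *m Lc + XcS *m Km *m Xc = 0.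
    by rewrite -(mulmx0 p1 XcS) -hc; mexp; zsolve.
  have h2 : LcS *m LcS *m (e1 *: (XcS *m M *m Xc)) + LcS *m (e2 *: (XcS *m D *m Xc))
      + e1 *: (XcS *m Km *m Xc) = 0.
    by rewrite -(mul0mx p1 Xc) -hcs; mexp; zsolve.
  have h3 := hS; rewrite starM eSs eS in h3.
  have hLZ := L_Z he1 he2 h1 h2 h3.
  have eR0' : R0 = XcS *m M *m Xc *m PLaPi + (e1 * e2) *: (LcS *m (XcS *m M *m Xc))
      + XcS *m D *m Xc by rewrite eR0 !mulmxA.
  have hLZ' : (LcS - mxstar f st PLaPi) *m R0 = e1 *: (mxstar f st R0 *m (Lc - PLaPi)).
    have eR0s : mxstar f st R0 = mxstar f st PLaPi *m (e1 *: (XcS *m M *m Xc))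
        + (e1 * e2) *: ((e1 *: (XcS *m M *m Xc)) *m Lc) + e2 *: (XcS *m D *m Xc).
      rewrite eR0' !starD hZ12 !starM hM hD eLcS eXcS !starK //.
      by mexp.
    rewrite eR0s eR0'.
    exact: hLZ.
  have hZs : mxstar f st Z = e1 *: Z.
    rewrite eZ starM starV starB -eLcS.
    rewrite -[LcS - _](mulmxK hR) hLZ'.
    by rewrite -scalemxAl -scalemxAr -mulmxA mulKmx ?star_unit.
  rewrite eXcS eLcS in hZs *.
  have hst : forall m0 n0 (A : 'M_(m0,n0)), mxstar f st (mxstar f st A) = A.
    by move=> m0 n0 A; rewrite starK.
  split.
  + by repeat progress rewrite ?starD ?hZ12 ?starM ?hst ?hM ?hD ?hK ?hZs; esolve e1 e2 he1 he2.
  + by repeat progress rewrite ?starD ?hZ12 ?starM ?hst ?hM ?hD ?hK ?hZs; esolve e1 e2 he1 he2.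
  + by repeat progress rewrite ?starD ?hZ12 ?starM ?hst ?hM ?hD ?hK ?hZs; esolve e1 e2 he1 he2.
  rewrite /invariant_pair L_Qexp.
  set Y := (X in _ + _ *m X *m Lf + _ *m X = 0).
  have eY := L_Y M D Km XcS LcS Xf Lf he1 he2.
  rewrite /= hcs mul0mx scaler0 subr0 hf mulmx0 -/Y in eY.
  have hYL : Y *m Lf = (e1*e2) *: (LcS *m Y).
    apply: subr0_eq. exact eY.
  have ee : (e1 * e2) * (e1 * e2) = 1 by rewrite mulrACA (sign_sq he1) (sign_sq he2) mulr1.
  have hs : mxstar f st Y *m Lc = ((e1*e2) *: mxstar f st Lf) *m mxstar f st Y.
    have := congr1 (@mxstar K f st p1 p2) hYL.
    rewrite !starM starZ // starM eLcS starK // => h.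
    by rewrite -scalemxAl h scalerA ee scale1r.
  have hm : map_mx emb (mxstar f st Y) *m map_mx emb Lc
      = map_mx emb ((e1*e2) *: mxstar f st Lf) *m map_mx emb (mxstar f st Y).
    by rewrite -!map_mxM hs.
  have := sylv hm (fun z => hsp z) => /eqP; rewrite map_mx_eq0 => /eqP hY0.
  have hY : Y = 0 by rewrite -(starK finv st Y) hY0 star0.
  by rewrite hf hY !mulmx0 mul0mx !addr0.
rewrite /invariant_pair L_Qexp.
have hW : XcS *m M *m (Xc *m P) *m La
   + ((e1 * e2) *: (LcS *m XcS *m M) + XcS *m D) *m (Xc *m P) = R0 *m P.
  by rewrite eR0; mexp; rewrite !hT; zsolve.
rewrite hW !mulmxA !hZR.
rewrite -[RHS](mul0mx _ P) -hc -(L_Xa M D Km Xc Lc PLaPi).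
by mexp; rewrite ?hT.
Qed.

Unset Implicit Arguments.

Theorem theorem3p8 (R : realType) :
  thm38_over (@id R) (real_complex R) /\
  thm38_over (fun z : R[i] => Num.conj z) (@id R[i]).
Proof.
split.
  exact: (@main R R[i] idfun (real_complex R) (fun x => erefl)).
exact: (@main R[i] R[i] (@Num.conj_op R[i]) idfun (@conjCK R[i])).
Qed.
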